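(* For every real $n\ge2$, \[ \max_{a\in[0,1]}\Bigl((n-1)e^{\frac{1-a^2}{n}}+e^{\frac{1-(n(1-a)+a)^2}{n}}\Bigr)\le n. \] *)

(* Defs.v *)
From Stdlib Require Import Reals.
Open Scope R_scope.

(* Main.v *)
Require Import Defs.
From Stdlib Require Import Reals Lra.
From Coquelicot Require Import Coquelicot.
Open Scope R_scope.

Lemma mono0 (f f' : R -> R) :
  (forall c, derivable_pt_lim f c (f' c)) -> (forall c, 0 <= c -> 0 <= f' c) ->
  forall x, 0 <= x -> f 0 <= f x.
Proof.
  intros Hd Hp x Hx. destruct (Req_dec x 0) as [->|Hx0]; [lra|].
  destruct (MVT_cor2 f f' 0 x) as [c [Hc1 Hc2]]; [lra| intros; apply Hd |].
  assert (0 <= f' c * (x - 0)) by (apply Rmult_le_pos; [apply Hp; lra | lra]). lra.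
Qed.

Lemma expm_2 x : 0 <= x -> exp (-x) <= 1 - x + x^2/2.
Proof.
  intros Hx.
  pose proof (mono0 (fun x => 1 - x + x^2/2 - exp (-x)) (fun x => -1 + x + exp (-x))) as H.
  simpl in H. rewrite Ropp_0, exp_0 in H.
  assert (0 <= 1 - x + x * (x * 1) / 2 - exp (- x)); [|simpl; lra].
  replace 0 with (1 - 0 + 0 * (0 * 1) / 2 - 1) by lra. apply H; auto.
  - intros c. apply is_derive_Reals. auto_derive; auto. field.
  - intros c _. pose proof (exp_ineq1_le (-c)). lra.
Qed.

Lemma expm_3 x : 0 <= x -> 1 - x + x^2/2 - x^3/6 <= exp (-x).
Proof.
  intros Hx.
  pose proof (mono0 (fun x => exp (-x) - (1 - x + x^2/2 - x^3/6)) (fun x => - exp (-x) + (1 - x + x^2/2))) as H.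
  simpl in H. rewrite Ropp_0, exp_0 in H.
  assert (0 <= exp (- x) - (1 - x + x * (x * 1) / 2 - x * (x * (x * 1)) / 6)); [|simpl; lra].
  replace 0 with (1 - (1 - 0 + 0 * (0 * 1) / 2 - 0 * (0 * (0 * 1)) / 6)) by lra. apply H; auto.
  - intros c. apply is_derive_Reals. auto_derive; auto. field.
  - intros c Hc. pose proof (expm_2 c Hc). simpl in *. lra.
Qed.

Lemma expp_1 x : 0 <= x -> 1 + x + x^2/2 <= exp x.
Proof.
  intros Hx.
  pose proof (mono0 (fun x => exp x - (1 + x + x^2/2)) (fun x => exp x - (1 + x))) as H.
  simpl in H. rewrite exp_0 in H.
  assert (0 <= exp x - (1 + x + x * (x * 1) / 2)); [|simpl; lra].
  replace 0 with (1 - (1 + 0 + 0 * (0 * 1) / 2)) by lra. apply H; auto.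
  - intros c. apply is_derive_Reals. auto_derive; auto. field.
  - intros c Hc. pose proof (exp_ineq1_le c). lra.
Qed.

Lemma expp_2 x : 0 <= x -> 1 + x + x^2/2 + x^3/6 <= exp x.
Proof.
  intros Hx.
  pose proof (mono0 (fun x => exp x - (1 + x + x^2/2 + x^3/6)) (fun x => exp x - (1 + x + x^2/2))) as H.
  simpl in H. rewrite exp_0 in H.
  assert (0 <= exp x - (1 + x + x * (x * 1) / 2 + x * (x * (x * 1)) / 6)); [|simpl; lra].
  replace 0 with (1 - (1 + 0 + 0 * (0 * 1) / 2 + 0 * (0 * (0 * 1)) / 6)) by lra. apply H; auto.
  - intros c. apply is_derive_Reals. auto_derive; auto. field.
  - intros c Hc. pose proof (expp_1 c Hc). simpl in *. lra.
Qed.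

Lemma expp_3 x : 0 <= x -> 1 + x + x^2/2 + x^3/6 + x^4/24 <= exp x.
Proof.
  intros Hx.
  pose proof (mono0 (fun x => exp x - (1 + x + x^2/2 + x^3/6 + x^4/24)) (fun x => exp x - (1 + x + x^2/2 + x^3/6))) as H.
  simpl in H. rewrite exp_0 in H.
  assert (0 <= exp x - (1 + x + x * (x * 1) / 2 + x * (x * (x * 1)) / 6 + x * (x * (x * (x * 1))) / 24)); [|simpl; lra].
  replace 0 with (1 - (1 + 0 + 0 * (0 * 1) / 2 + 0 * (0 * (0 * 1)) / 6 + 0 * (0 * (0 * (0 * 1))) / 24)) by lra. apply H; auto.
  - intros c. apply is_derive_Reals. auto_derive; auto. field.
  - intros c Hc. pose proof (expp_2 c Hc). simpl in *. lra.
Qed.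

Ltac pos := lazymatch goal with
 | |- 0 <= _ + _ => apply Rplus_le_le_0_compat; pos
 | |- 0 <= _ * _ => apply Rmult_le_pos; pos
 | |- 0 <= _ ^ _ => apply pow_le; pos
 | _ => lra end.

Theorem proposition3p2 (n : R) (hn : 2 <= n) :
  forall a : R, 0 <= a <= 1 ->
    (n - 1) * exp ((1 - a ^ 2) / n) + exp ((1 - (n * (1 - a) + a) ^ 2) / n) <= n.
Proof.
  intros a Ha.
  set (k := n - 2). set (u := 1 - a).
  set (x := (1 - a ^ 2) / n).
  set (y := - ((1 - (n * (1 - a) + a) ^ 2) / n)).
  assert (Ha2 : a^2 <= 1) by (simpl; nra).
  assert (Hx0 : 0 <= x) by (unfold x; apply Rdiv_le_0_compat; lra).
  assert (Hx1 : x <= 1/2).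
  { unfold x. apply Rmult_le_reg_r with n; [lra|]. field_simplify; try lra; nra. }
  assert (Hy0 : 0 <= y).
  { unfold y. rewrite <- Ropp_div. assert (Hb : 1 <= n * (1 - a) + a) by nra.
    assert (1 <= (n * (1 - a) + a)^2) by (simpl; nra). apply Rdiv_le_0_compat; lra. }
  set (P := 1 - x + x^2/2 - x^3/6).
  set (Q := 1 + y + y^2/2 + y^3/6 + y^4/24).
  assert (HP : 0 < P) by (unfold P; nra).
  assert (HQ : 1 <= Q) by (unfold Q; assert (0 <= y^2) by nra; assert (0 <= y^3) by (apply pow_le; lra); assert (0 <= y^4) by (apply pow_le; lra); lra).
  assert (E1 : exp x <= / P).
  { pose proof (expm_3 x Hx0). fold P in H.
    replace (exp x) with (/ exp (-x)) by (rewrite exp_Ropp; field; apply Rgt_not_eq, exp_pos).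
    apply Rinv_le_contravar; lra. }
  assert (E2 : exp (-y) <= / Q).
  { pose proof (expp_3 y Hy0). fold Q in H.
    rewrite exp_Ropp. apply Rinv_le_contravar; lra. }
  replace ((1 - (n * u + a) ^ 2) / n) with (-y) by (unfold y, u; field; lra).
  fold x.
  assert (Key : 0 <= n * P * Q - (n - 1) * Q - P).
  { assert (G : n^7 * (n * P * Q - (n - 1) * Q - P) = (16/1)*k^0*u^4*(1-u)^10 + (160/1)*k^0*u^5*(1-u)^9 + (6632/9)*k^0*u^6*(1-u)^8 + (2056/1)*k^0*u^7*(1-u)^7 + (34595/9)*k^0*u^8*(1-u)^6 + (45232/9)*k^0*u^9*(1-u)^5 + (4649/1)*k^0*u^10*(1-u)^4 + (27016/9)*k^0*u^11*(1-u)^3 + (15527/12)*k^0*u^12*(1-u)^2 + (4033/12)*k^0*u^13*(1-u)^1 + (959/24)*k^0*u^14*(1-u)^0 + (64/1)*k^1*u^2*(1-u)^12 + (2048/3)*k^1*u^3*(1-u)^11 + (10264/3)*k^1*u^4*(1-u)^10 + (10704/1)*k^1*u^5*(1-u)^9 + (210836/9)*k^1*u^6*(1-u)^8 + (342364/9)*k^1*u^7*(1-u)^7 + (283763/6)*k^1*u^8*(1-u)^6 + (409996/9)*k^1*u^9*(1-u)^5 + (303995/9)*k^1*u^10*(1-u)^4 + (37503/2)*k^1*u^11*(1-u)^3 + (22070/3)*k^1*u^12*(1-u)^2 + (43631/24)*k^1*u^13*(1-u)^1 + (10201/48)*k^1*u^14*(1-u)^0 + (256/1)*k^2*u^2*(1-u)^12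 + (8320/3)*k^2*u^3*(1-u)^11 + (41860/3)*k^2*u^4*(1-u)^10 + (129512/3)*k^2*u^5*(1-u)^9 + (825410/9)*k^2*u^6*(1-u)^8 + (1273646/9)*k^2*u^7*(1-u)^7 + (5891189/36)*k^2*u^8*(1-u)^6 + (1297207/9)*k^2*u^9*(1-u)^5 + (3492799/36)*k^2*u^10*(1-u)^4 + (1772371/36)*k^2*u^11*(1-u)^3 + (865133/48)*k^2*u^12*(1-u)^2 + (34237/8)*k^2*u^13*(1-u)^1 + (7927/16)*k^2*u^14*(1-u)^0 + (432/1)*k^3*u^2*(1-u)^12 + (14272/3)*k^3*u^3*(1-u)^11 + (72754/3)*k^3*u^4*(1-u)^10 + (75652/1)*k^3*u^5*(1-u)^9 + (1448225/9)*k^3*u^6*(1-u)^8 + (246207/1)*k^3*u^7*(1-u)^7 + (20069747/72)*k^3*u^8*(1-u)^6 + (4262185/18)*k^3*u^9*(1-u)^5 + (606007/4)*k^3*u^10*(1-u)^4 + (434791/6)*k^3*u^11*(1-u)^3 + (1809463/72)*k^3*u^12*(1-u)^2 + (5773/1)*k^3*u^13*(1-u)^1 + (23999/36)*k^3*u^14*(1-u)^0 + (400/1)*k^4*u^2*(1-u)^12 + (4480/1)*k^4*u^3*(1-u)^11 + (23226/1)*k^4*u^4*(1-u)^10 + (73600/1)*k^4*u^5*(1-u)^9 + (1427441/9)*k^4*u^6*(1-u)^8 + (2202115/9)*k^4*u^7*(1-u)^7 + (1108505/4)*k^4*u^8*(1-u)^6 + (2095157/9)*k^4*u^9*(1-u)^5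 + (5224591/36)*k^4*u^10*(1-u)^4 + (200048/3)*k^4*u^11*(1-u)^3 + (796217/36)*k^4*u^12*(1-u)^2 + (44422/9)*k^4*u^13*(1-u)^1 + (573/1)*k^4*u^14*(1-u)^0 + (220/1)*k^5*u^2*(1-u)^12 + (7520/3)*k^5*u^3*(1-u)^11 + (39776/3)*k^5*u^4*(1-u)^10 + (42942/1)*k^5*u^5*(1-u)^9 + (1703233/18)*k^5*u^6*(1-u)^8 + (1341362/9)*k^5*u^7*(1-u)^7 + (3087919/18)*k^5*u^8*(1-u)^6 + (1306121/9)*k^5*u^9*(1-u)^5 + (3232631/36)*k^5*u^10*(1-u)^4 + (723757/18)*k^5*u^11*(1-u)^3 + (230983/18)*k^5*u^12*(1-u)^2 + (100307/36)*k^5*u^13*(1-u)^1 + (23635/72)*k^5*u^14*(1-u)^0 + (72/1)*k^6*u^2*(1-u)^12 + (2504/3)*k^6*u^3*(1-u)^11 + (27145/6)*k^6*u^4*(1-u)^10 + (15100/1)*k^6*u^5*(1-u)^9 + (103288/3)*k^6*u^6*(1-u)^8 + (168650/3)*k^6*u^7*(1-u)^7 + (602606/9)*k^6*u^8*(1-u)^6 + (523552/9)*k^6*u^9*(1-u)^5 + (218459/6)*k^6*u^10*(1-u)^4 + (16113/1)*k^6*u^11*(1-u)^3 + (357523/72)*k^6*u^12*(1-u)^2 + (4185/4)*k^6*u^13*(1-u)^1 + (9119/72)*k^6*u^14*(1-u)^0 + (13/1)*k^7*u^2*(1-u)^12 + (460/3)*k^7*u^3*(1-u)^11 + (2579/3)*k^7*u^4*(1-u)^10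 + (3006/1)*k^7*u^5*(1-u)^9 + (14505/2)*k^7*u^6*(1-u)^8 + (37832/3)*k^7*u^7*(1-u)^7 + (64029/4)*k^7*u^8*(1-u)^6 + (132400/9)*k^7*u^9*(1-u)^5 + (172111/18)*k^7*u^10*(1-u)^4 + (12770/3)*k^7*u^11*(1-u)^3 + (45635/36)*k^7*u^12*(1-u)^2 + (2305/9)*k^7*u^13*(1-u)^1 + (389/12)*k^7*u^14*(1-u)^0 + (1/1)*k^8*u^2*(1-u)^12 + (12/1)*k^8*u^3*(1-u)^11 + (72/1)*k^8*u^4*(1-u)^10 + (835/3)*k^8*u^5*(1-u)^9 + (4547/6)*k^8*u^6*(1-u)^8 + (1502/1)*k^8*u^7*(1-u)^7 + (26029/12)*k^8*u^8*(1-u)^6 + (20092/9)*k^8*u^9*(1-u)^5 + (56725/36)*k^8*u^10*(1-u)^4 + (6526/9)*k^8*u^11*(1-u)^3 + (1871/9)*k^8*u^12*(1-u)^2 + (1397/36)*k^8*u^13*(1-u)^1 + (379/72)*k^8*u^14*(1-u)^0 + (1/2)*k^9*u^4*(1-u)^10 + (5/1)*k^9*u^5*(1-u)^9 + (73/3)*k^9*u^6*(1-u)^8 + (220/3)*k^9*u^7*(1-u)^7 + (437/3)*k^9*u^8*(1-u)^6 + (190/1)*k^9*u^9*(1-u)^5 + (1889/12)*k^9*u^10*(1-u)^4 + (703/9)*k^9*u^11*(1-u)^3 + (64/3)*k^9*u^12*(1-u)^2 + (79/24)*k^9*u^13*(1-u)^1 + (71/144)*k^9*u^14*(1-u)^0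 + (1/6)*k^10*u^6*(1-u)^6 + (1/1)*k^10*u^7*(1-u)^5 + (31/12)*k^10*u^8*(1-u)^4 + (17/6)*k^10*u^9*(1-u)^3 + (7/6)*k^10*u^10*(1-u)^2 + (1/12)*k^10*u^11*(1-u)^1 + (1/48)*k^10*u^12*(1-u)^0 + (1/24)*k^11*u^8*(1-u)^2).
    { unfold P, Q, x, y. replace a with (1 - u) by (unfold u; ring).
      replace n with (k + 2) by (unfold k; ring). field. unfold k; lra. }
    assert (Gpos : 0 <= (16/1)*k^0*u^4*(1-u)^10 + (160/1)*k^0*u^5*(1-u)^9 + (6632/9)*k^0*u^6*(1-u)^8 + (2056/1)*k^0*u^7*(1-u)^7 + (34595/9)*k^0*u^8*(1-u)^6 + (45232/9)*k^0*u^9*(1-u)^5 + (4649/1)*k^0*u^10*(1-u)^4 + (27016/9)*k^0*u^11*(1-u)^3 + (15527/12)*k^0*u^12*(1-u)^2 + (4033/12)*k^0*u^13*(1-u)^1 + (959/24)*k^0*u^14*(1-u)^0 + (64/1)*k^1*u^2*(1-u)^12 + (2048/3)*k^1*u^3*(1-u)^11 + (10264/3)*k^1*u^4*(1-u)^10 + (10704/1)*k^1*u^5*(1-u)^9 + (210836/9)*k^1*u^6*(1-u)^8 + (342364/9)*k^1*u^7*(1-u)^7 + (283763/6)*k^1*u^8*(1-u)^6 + (409996/9)*k^1*u^9*(1-u)^5 + (303995/9)*k^1*u^10*(1-u)^4 + (37503/2)*k^1*u^11*(1-u)^3 + (22070/3)*k^1*u^12*(1-u)^2 + (43631/24)*k^1*u^13*(1-u)^1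 + (10201/48)*k^1*u^14*(1-u)^0 + (256/1)*k^2*u^2*(1-u)^12 + (8320/3)*k^2*u^3*(1-u)^11 + (41860/3)*k^2*u^4*(1-u)^10 + (129512/3)*k^2*u^5*(1-u)^9 + (825410/9)*k^2*u^6*(1-u)^8 + (1273646/9)*k^2*u^7*(1-u)^7 + (5891189/36)*k^2*u^8*(1-u)^6 + (1297207/9)*k^2*u^9*(1-u)^5 + (3492799/36)*k^2*u^10*(1-u)^4 + (1772371/36)*k^2*u^11*(1-u)^3 + (865133/48)*k^2*u^12*(1-u)^2 + (34237/8)*k^2*u^13*(1-u)^1 + (7927/16)*k^2*u^14*(1-u)^0 + (432/1)*k^3*u^2*(1-u)^12 + (14272/3)*k^3*u^3*(1-u)^11 + (72754/3)*k^3*u^4*(1-u)^10 + (75652/1)*k^3*u^5*(1-u)^9 + (1448225/9)*k^3*u^6*(1-u)^8 + (246207/1)*k^3*u^7*(1-u)^7 + (20069747/72)*k^3*u^8*(1-u)^6 + (4262185/18)*k^3*u^9*(1-u)^5 + (606007/4)*k^3*u^10*(1-u)^4 + (434791/6)*k^3*u^11*(1-u)^3 + (1809463/72)*k^3*u^12*(1-u)^2 + (5773/1)*k^3*u^13*(1-u)^1 + (23999/36)*k^3*u^14*(1-u)^0 + (400/1)*k^4*u^2*(1-u)^12 + (4480/1)*k^4*u^3*(1-u)^11 + (23226/1)*k^4*u^4*(1-u)^10 + (73600/1)*k^4*u^5*(1-u)^9 + (1427441/9)*k^4*u^6*(1-u)^8 + (2202115/9)*k^4*u^7*(1-u)^7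 + (1108505/4)*k^4*u^8*(1-u)^6 + (2095157/9)*k^4*u^9*(1-u)^5 + (5224591/36)*k^4*u^10*(1-u)^4 + (200048/3)*k^4*u^11*(1-u)^3 + (796217/36)*k^4*u^12*(1-u)^2 + (44422/9)*k^4*u^13*(1-u)^1 + (573/1)*k^4*u^14*(1-u)^0 + (220/1)*k^5*u^2*(1-u)^12 + (7520/3)*k^5*u^3*(1-u)^11 + (39776/3)*k^5*u^4*(1-u)^10 + (42942/1)*k^5*u^5*(1-u)^9 + (1703233/18)*k^5*u^6*(1-u)^8 + (1341362/9)*k^5*u^7*(1-u)^7 + (3087919/18)*k^5*u^8*(1-u)^6 + (1306121/9)*k^5*u^9*(1-u)^5 + (3232631/36)*k^5*u^10*(1-u)^4 + (723757/18)*k^5*u^11*(1-u)^3 + (230983/18)*k^5*u^12*(1-u)^2 + (100307/36)*k^5*u^13*(1-u)^1 + (23635/72)*k^5*u^14*(1-u)^0 + (72/1)*k^6*u^2*(1-u)^12 + (2504/3)*k^6*u^3*(1-u)^11 + (27145/6)*k^6*u^4*(1-u)^10 + (15100/1)*k^6*u^5*(1-u)^9 + (103288/3)*k^6*u^6*(1-u)^8 + (168650/3)*k^6*u^7*(1-u)^7 + (602606/9)*k^6*u^8*(1-u)^6 + (523552/9)*k^6*u^9*(1-u)^5 + (218459/6)*k^6*u^10*(1-u)^4 + (16113/1)*k^6*u^11*(1-u)^3 + (357523/72)*k^6*u^12*(1-u)^2 + (4185/4)*k^6*u^13*(1-u)^1 + (9119/72)*k^6*u^14*(1-u)^0 + (13/1)*k^7*u^2*(1-u)^12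 + (460/3)*k^7*u^3*(1-u)^11 + (2579/3)*k^7*u^4*(1-u)^10 + (3006/1)*k^7*u^5*(1-u)^9 + (14505/2)*k^7*u^6*(1-u)^8 + (37832/3)*k^7*u^7*(1-u)^7 + (64029/4)*k^7*u^8*(1-u)^6 + (132400/9)*k^7*u^9*(1-u)^5 + (172111/18)*k^7*u^10*(1-u)^4 + (12770/3)*k^7*u^11*(1-u)^3 + (45635/36)*k^7*u^12*(1-u)^2 + (2305/9)*k^7*u^13*(1-u)^1 + (389/12)*k^7*u^14*(1-u)^0 + (1/1)*k^8*u^2*(1-u)^12 + (12/1)*k^8*u^3*(1-u)^11 + (72/1)*k^8*u^4*(1-u)^10 + (835/3)*k^8*u^5*(1-u)^9 + (4547/6)*k^8*u^6*(1-u)^8 + (1502/1)*k^8*u^7*(1-u)^7 + (26029/12)*k^8*u^8*(1-u)^6 + (20092/9)*k^8*u^9*(1-u)^5 + (56725/36)*k^8*u^10*(1-u)^4 + (6526/9)*k^8*u^11*(1-u)^3 + (1871/9)*k^8*u^12*(1-u)^2 + (1397/36)*k^8*u^13*(1-u)^1 + (379/72)*k^8*u^14*(1-u)^0 + (1/2)*k^9*u^4*(1-u)^10 + (5/1)*k^9*u^5*(1-u)^9 + (73/3)*k^9*u^6*(1-u)^8 + (220/3)*k^9*u^7*(1-u)^7 + (437/3)*k^9*u^8*(1-u)^6 + (190/1)*k^9*u^9*(1-u)^5 + (1889/12)*k^9*u^10*(1-u)^4 + (703/9)*k^9*u^11*(1-u)^3 + (64/3)*k^9*u^12*(1-u)^2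 + (79/24)*k^9*u^13*(1-u)^1 + (71/144)*k^9*u^14*(1-u)^0 + (1/6)*k^10*u^6*(1-u)^6 + (1/1)*k^10*u^7*(1-u)^5 + (31/12)*k^10*u^8*(1-u)^4 + (17/6)*k^10*u^9*(1-u)^3 + (7/6)*k^10*u^10*(1-u)^2 + (1/12)*k^10*u^11*(1-u)^1 + (1/48)*k^10*u^12*(1-u)^0 + (1/24)*k^11*u^8*(1-u)^2).
    { assert (0 <= k) by (unfold k; lra). assert (0 <= u) by (unfold u; lra). assert (0 <= 1 - u) by (unfold u; lra).
      pos. }
    rewrite <- G in Gpos.
    apply Rmult_le_reg_l with (n^7). apply pow_lt; lra. lra. }
  assert (Hn1 : 0 <= n - 1) by lra.
  assert (T : (n-1) * exp x + exp (-y) <= (n-1) * / P + / Q).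
  { apply Rplus_le_compat; [apply Rmult_le_compat_l|]; lra. }
  assert (T2 : (n-1) * / P + / Q = n - (n * P * Q - (n - 1) * Q - P) / (P * Q)) by (field; lra).
  assert (0 <= (n * P * Q - (n - 1) * Q - P) / (P * Q)) by (apply Rdiv_le_0_compat; [lra | apply Rmult_lt_0_compat; lra]).
  lra.
Qed.
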